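(* Let $a=\{a_k\}_{k=0}^\infty$ be a real sequence with $1=a_0>a_1\geq a_2\geq\cdots\geq a_{k-1}\geq a_k\geq\cdots$, $\lim_{k\to\infty}a_k=0$, and $\sum_{k=0}^\infty a_k=\infty$. Define $\{b_k\}_{k=0}^\infty$ by $b_0=1/a_0$ and $b_k=-\frac{1}{a_0}\sum_{j=0}^{k-1}a_{k-j}b_j$ for $k\geq1$, and let $u_k=\sum_{j=0}^k b_j$ for $k\geq 0$. Then $\lim_{k\to\infty}u_k=0$.
   Context: The sequence $\{b_k\}$ gives the entries of the inverse $B=A^{-1}$ of the half-infinite lower triangular Toeplitz matrix $A$ with entries $A_{ij}=a_{i-j}$ for $i\geq j$ (and $0$ otherwise); $B$ is again lower triangular Toeplitz with $B_{ij}=b_{i-j}$. The sequence $\{u_k\}$ of partial sums is called the fundamental matrix of $a$. *)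

(* Defs.v *)
From Stdlib Require Import Reals Lra Lia List.
From Coquelicot Require Import Coquelicot.
Open Scope R_scope.

Fixpoint sumR (f : nat -> R) (n : nat) : R :=
  match n with O => 0 | S m => sumR f m + f m end.

(* bs a n = [b_n; b_{n-1}; ...; b_0] *)
Fixpoint bs (a : nat -> R) (n : nat) : list R :=
  match n with
  | O => (1 / a 0%nat) :: nil
  | S m =>
      let prev := bs a m in
      let bj := fun j => nth (m - j) prev 0 in
      (- (1 / a 0%nat) * sumR (fun j => a (S m - j)%nat * bj j) (S m)) :: prev
  end.

(* b_k: inverse coefficients of the lower triangular Toeplitz matrix of a *)
Definition b (a : nat -> R) (k : nat) : R := nth 0 (bs a k) 0.

Definition u (a : nat -> R) (k : nat) : R := sumR (b a) (S k).

Lemma bs_length a n : length (bs a n) = S n.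
Proof. induction n; simpl; auto. Qed.

Lemma b_0 a : b a 0 = 1 / a 0%nat.
Proof. reflexivity. Qed.

Lemma nth_bs a m j : (j <= m)%nat -> nth (m - j) (bs a m) 0 = b a j.
Proof.
  intros H. induction m as [|m IH].
  - assert (j = 0%nat) by lia; subst; reflexivity.
  - destruct (Nat.eq_dec j (S m)) as [->|Hn].
    + rewrite Nat.sub_diag; reflexivity.
    + replace (S m - j)%nat with (S (m - j)) by lia. simpl. apply IH; lia.
Qed.

Lemma sumR_ext f g n : (forall j, (j < n)%nat -> f j = g j) -> sumR f n = sumR g n.
Proof. induction n; simpl; intros H; auto. rewrite IHn, H; auto. Qed.

Lemma b_S a k :
  b a (S k) = - (1 / a 0%nat) * sumR (fun j => a (S k - j)%nat * b a j) (S k).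
Proof.
  unfold b at 1; cbn [bs nth]. f_equal. apply sumR_ext. intros j Hj.
  rewrite nth_bs by lia. reflexivity.
Qed.

(* Main.v *)
Require Import Defs.
From Stdlib Require Import Reals Lra Lia Arith.
From Coquelicot Require Import Coquelicot.
Open Scope R_scope.

Lemma sumR_shift f n : sumR f (S n) = f 0%nat + sumR (fun j => f (S j)) n.
Proof. induction n; simpl in *; [lra|]. rewrite IHn. lra. Qed.

Lemma sumR_refl f n : sumR f n = sumR (fun j => f (n - 1 - j)%nat) n.
Proof.
  induction n; [reflexivity|].
  rewrite (sumR_shift (fun j => f (S n - 1 - j)%nat)). change (sumR f (S n)) with (sumR f n + f n).
  rewrite IHn. try replace (S n - 1 - 0)%nat with n by lia.
  rewrite (sumR_ext (fun j => f (S n - 1 - S j)%nat) (fun j => f (n - 1 - j)%nat)); [lra|].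
  intros j Hj. f_equal. lia.
Qed.

Lemma sumR_le f g n : (forall k, (k < n)%nat -> f k <= g k) -> sumR f n <= sumR g n.
Proof. induction n; simpl; intros H; [lra|]. pose proof (H n ltac:(lia)).
  pose proof (IHn ltac:(intros; apply H; lia)). lra. Qed.

Lemma sumR_plus f g n : sumR (fun k => f k + g k) n = sumR f n + sumR g n.
Proof. induction n; simpl; [lra|]. rewrite IHn; lra. Qed.
Lemma sumR_minus f g n : sumR (fun k => f k - g k) n = sumR f n - sumR g n.
Proof. induction n; simpl; [lra|]. rewrite IHn; lra. Qed.
Lemma sumR_scal c f n : sumR (fun k => c * f k) n = c * sumR f n.
Proof. induction n; simpl; [lra|]. rewrite IHn; lra. Qed.
Lemma sumR_tele a n : sumR (fun k => a k - a (S k)) n = a 0%nat - a n.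
Proof. induction n; simpl; [lra|]. rewrite IHn; lra. Qed.
Lemma sumR_f_R0 a n : sum_f_R0 a n = sumR a (S n).
Proof. induction n; simpl in *; [lra|]. rewrite IHn. reflexivity. Qed.

Lemma sumR_mono_len f m n : (m <= n)%nat -> (forall k, 0 <= f k) -> sumR f m <= sumR f n.
Proof. intros H Hf. induction H; [lra|]. simpl. pose proof (Hf m0). lra. Qed.

Lemma sumR_nonneg f n : (forall k, (k < n)%nat -> 0 <= f k) -> 0 <= sumR f n.
Proof. intros. apply Rle_trans with (sumR (fun _ => 0) n).
  - clear. induction n; simpl; lra.
  - apply sumR_le; auto. Qed.

Section Main.
Variable a : nat -> R.
Hypothesis ha0 : a 0%nat = 1.
Hypothesis ha01 : a 0%nat > a 1%nat.
Hypothesis hmono : forall k : nat, (1 <= k)%nat -> a (S k) <= a k.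
Hypothesis hlim : is_lim_seq a 0.

Let v := u a.

Lemma amono k : a (S k) <= a k.
Proof. destruct k; [lra|]. apply hmono; lia. Qed.

Lemma aanti m n : (m <= n)%nat -> a n <= a m.
Proof. intros H; induction H; [lra|]. pose proof (amono m0); lra. Qed.

Lemma anonneg k : 0 <= a k.
Proof.
  destruct (Rle_or_lt 0 (a k)) as [h|h]; auto. exfalso.
  apply is_lim_seq_spec in hlim. destruct (hlim (mkposreal (- a k) ltac:(lra))) as [N HN].
  specialize (HN (N + k)%nat ltac:(lia)). simpl in HN.
  pose proof (aanti k (N+k) ltac:(lia)).
  rewrite Rminus_0_r in HN. apply Rabs_def2 in HN. lra.
Qed.

Lemma conv_zero n : sumR (fun k => a k * b a (S n - k)%nat) (S (S n)) = 0.
Proof.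
  rewrite sumR_refl.
  rewrite (sumR_ext _ (fun j => a (S n - j)%nat * b a j)).
  2:{ intros j Hj. f_equal; f_equal; lia. }
  change (sumR (fun j => a (S n - j)%nat * b a j) (S (S n)))
    with (sumR (fun j => a (S n - j)%nat * b a j) (S n) + a (S n - S n)%nat * b a (S n)).
  rewrite Nat.sub_diag, b_S, ha0. field.
Qed.

Lemma vS n : v (S n) = v n + b a (S n).
Proof. reflexivity. Qed.

Lemma renewal n : sumR (fun k => a k * v (n - k)%nat) (S n) = 1.
Proof.
  induction n.
  - simpl. unfold v, u. simpl. rewrite b_0, ha0. field.
  - change (sumR (fun k => a k * v (S n - k)%nat) (S (S n)))
      with (sumR (fun k => a k * v (S n - k)%nat) (S n) + a (S n) * v (S n - S n)%nat).
    rewrite (sumR_ext _ (fun k => a k * v (n - k)%nat + a k * b a (S n - k)%nat)).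
    2:{ intros k Hk. replace (S n - k)%nat with (S (n - k)) by lia. rewrite vS. ring. }
    rewrite sumR_plus, IHn. pose proof (conv_zero n) as C.
    change (sumR (fun k => a k * b a (S n - k)%nat) (S (S n)))
      with (sumR (fun k => a k * b a (S n - k)%nat) (S n) + a (S n) * b a (S n - S n)%nat) in C.
    rewrite Nat.sub_diag in *. assert (v 0%nat = b a 0) by (unfold v, u; simpl; ring). rewrite H; lra.
Qed.

Definition q k := a k - a (S k).

Lemma recur n : v (S n) = sumR (fun k => q k * v (n - k)%nat) (S n).
Proof.
  pose proof (renewal (S n)) as R1. pose proof (renewal n) as R0.
  rewrite sumR_shift in R1. rewrite Nat.sub_0_r, ha0 in R1.
  unfold q. rewrite (sumR_ext _ (fun k => a k * v (n-k)%nat - a (S k) * v (n - k)%nat)).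
  2:{ intros; ring. }
  rewrite sumR_minus. rewrite R0.
  rewrite (sumR_ext (fun j => a (S j) * v (S n - S j)%nat) (fun k => a (S k) * v (n - k)%nat)) in R1.
  2:{ intros; reflexivity. }
  lra.
Qed.

Lemma qnonneg k : 0 <= q k.
Proof. unfold q. pose proof (amono k). lra. Qed.

Lemma vbound n : 0 <= v n <= 1.
Proof.
  induction n as [n IH] using lt_wf_ind.
  destruct n.
  - unfold v, u. simpl. rewrite b_0, ha0. lra.
  - rewrite recur. split.
    + apply sumR_nonneg. intros k Hk. apply Rmult_le_pos. apply qnonneg. apply IH; lia.
    + apply Rle_trans with (sumR q (S n)).
      * apply sumR_le. intros k Hk. pose proof (qnonneg k). pose proof (IH (n-k)%nat ltac:(lia)).
        nra.
      * unfold q. rewrite sumR_tele. pose proof (anonneg (S n)). lra.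
Qed.

Lemma key (lam : R) (Hub : forall eps : posreal, exists N, forall n, (N <= n)%nat -> v n < lam + eps)
  (Hl : 0 <= lam) :
  forall delta, 0 < delta -> exists eta, 0 < eta /\ exists N0, forall n, (N0 <= n)%nat ->
     v (S n) > lam - eta -> v n > lam - delta.
Proof.
  intros d Hd.
  assert (Hq0 : 0 < q 0%nat) by (unfold q; lra).
  set (e := q 0%nat * d / 3).
  assert (He : 0 < e) by (unfold e; apply Rmult_lt_0_compat; [apply Rmult_lt_0_compat|]; lra).
  exists e. split; auto.
  pose proof hlim as hl. apply is_lim_seq_spec in hl. destruct (hl (mkposreal e He)) as [K HK].
  destruct (Hub (mkposreal e He)) as [N1 HN1]. simpl in *.
  exists (N1 + K)%nat. intros n Hn Hv.
  rewrite recur, sumR_shift, Nat.sub_0_r in Hv.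
  assert (Hs : sumR (fun j => q (S j) * v (n - S j)%nat) n <=
    sumR (fun k => (lam + e) * q (S k) + (if (k <? K)%nat then 0 else q (S k))) n).
  { apply sumR_le. intros k Hk. pose proof (qnonneg (S k)). pose proof (vbound (n - S k)).
    destruct (Nat.ltb_spec k K).
    - pose proof (HN1 (n - S k)%nat ltac:(lia)). nra.
    - nra. }
  rewrite sumR_plus, sumR_scal in Hs.
  assert (Ht : forall m, sumR (fun k => if (k <? K)%nat then 0 else q (S k)) m <= a (S K)).
  { intros m. induction m.
    - simpl. pose proof (anonneg (S K)). lra.
    - assert (Hm : sumR (fun k => if (k <? K)%nat then 0 else q (S k)) (S m) =
         if (m <? K)%nat then 0 else a (S K) - a (S (S m))).
      { clear IHm. induction m.
        - simpl. destruct K; simpl; unfold q; [lra|lra].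
        - change (sumR (fun k => if (k <? K)%nat then 0 else q (S k)) (S (S m))) with
            (sumR (fun k => if (k <? K)%nat then 0 else q (S k)) (S m) +
             (if (S m <? K)%nat then 0 else q (S (S m)))).
          rewrite IHm. unfold q.
          destruct (Nat.ltb_spec m K), (Nat.ltb_spec (S m) K); try lia; try lra.
          assert (S m = K) by lia. subst. lra. }
      rewrite Hm. destruct (m <? K)%nat; pose proof (anonneg (S K)); pose proof (anonneg (S (S m))); lra. }
  pose proof (Ht n).
  assert (HaK : a (S K) < e).
  { specialize (HK (S K) ltac:(lia)). rewrite Rminus_0_r in HK. apply Rabs_def2 in HK. lra. }
  assert (Hq1 : sumR (fun k => q (S k)) n <= 1 - q 0%nat).
  { unfold q. rewrite (sumR_tele (fun k => a (S k))). pose proof (anonneg (S n)). unfold q. lra. }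
  assert (Hc : (lam + e) * sumR (fun k => q (S k)) n <= (lam + e) * (1 - q 0%nat)).
  { apply Rmult_le_compat_l; lra. }
  assert (q 0%nat * v n > q 0%nat * (lam - d)).
  { unfold e in *. nra. }
  apply Rmult_gt_reg_l with (q 0%nat); lra.
Qed.

Lemma iter (lam : R) (Hub : forall eps : posreal, exists N, forall n, (N <= n)%nat -> v n < lam + eps)
  (Hl : 0 <= lam) :
  forall m delta, 0 < delta -> exists eta, 0 < eta /\ exists N0, forall n, (N0 <= n)%nat ->
     v n > lam - eta -> forall k, (k <= m)%nat -> v (n - k)%nat > lam - delta.
Proof.
  induction m; intros d Hd.
  - exists d. split; auto. exists 0%nat. intros n _ Hv k Hk.
    replace (n - k)%nat with n by lia. auto.
  - destruct (key lam Hub Hl d Hd) as [e1 [He1 [N1 HN1]]].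
    destruct (IHm (Rmin d e1) ltac:(apply Rmin_glb_lt; lra)) as [e2 [He2 [N2 HN2]]].
    exists e2. split; auto. exists (N2 + N1 + S m)%nat. intros n Hn Hv k Hk.
    pose proof (Rmin_l d e1). pose proof (Rmin_r d e1).
    destruct (Nat.eq_dec k (S m)).
    + subst. apply HN1. lia. replace (S (n - S m)) with (n - m)%nat by lia.
      pose proof (HN2 n ltac:(lia) Hv m ltac:(lia)). lra.
    + pose proof (HN2 n ltac:(lia) Hv k ltac:(lia)). lra.
Qed.

End Main.

Theorem theorem1 (a : nat -> R)
  (ha0 : a 0%nat = 1)
  (ha01 : a 0%nat > a 1%nat)
  (hmono : forall k : nat, (1 <= k)%nat -> a (S k) <= a k)
  (hlim : is_lim_seq a 0)
  (hdiv : is_lim_seq (fun n => sum_f_R0 a n) p_infty) :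
  is_lim_seq (u a) 0.
Proof.
  pose proof (vbound a ha0 ha01 hmono hlim) as VB.
  destruct (ex_LimSup_seq (u a)) as [L HL].
  destruct L as [lam| |]; simpl in HL.
  - assert (Hl : 0 <= lam).
    { destruct (Rle_or_lt 0 lam); auto. destruct (HL (mkposreal (-lam) ltac:(lra))) as [_ [N HN]].
      specialize (HN N (le_n _)). pose proof (VB N). simpl in HN. lra. }
    destruct (Rle_or_lt lam 0) as [H0|Hpos].
    + apply is_lim_seq_spec. intros eps. destruct (HL eps) as [_ [N HN]]. exists N.
      intros n Hn. specialize (HN n Hn). pose proof (VB n). rewrite Rminus_0_r.
      rewrite Rabs_pos_eq by lra. lra.
    + exfalso.
      assert (Hub : forall eps : posreal, exists N, forall n, (N <= n)%nat -> u a n < lam + eps).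
      { intros eps. destruct (HL eps) as [_ H]. exact H. }
      apply is_lim_seq_spec in hdiv. destruct (hdiv (2 / lam)) as [N HN].
      specialize (HN N (le_n _)). simpl in HN.
      destruct (iter a ha0 ha01 hmono hlim lam Hub Hl N (lam/2) ltac:(lra)) as [e [He [N0 HN0]]].
      destruct (HL (mkposreal e He)) as [Hinf _]. destruct (Hinf (N0 + N)%nat) as [n [Hn Hv]].
      simpl in Hv.
      pose proof (HN0 n ltac:(lia) Hv) as Hk.
      pose proof (renewal a ha0 n) as R.
      assert (H1 : sumR (fun k => a k * u a (n - k)%nat) (S N) <= sumR (fun k => a k * u a (n - k)%nat) (S n)).
      { apply sumR_mono_len. lia. intros k. apply Rmult_le_pos. apply (anonneg a ha01 hmono hlim).
        apply VB. }
      assert (H2 : sumR (fun k => (lam/2) * a k) (S N) <= sumR (fun k => a k * u a (n - k)%nat) (S N)).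
      { apply sumR_le. intros k Hk'. pose proof (Hk k ltac:(lia)).
        pose proof (anonneg a ha01 hmono hlim k). nra. }
      rewrite sumR_scal, <- sumR_f_R0 in H2.
      assert (lam / 2 * sum_f_R0 a N > lam / 2 * (2 / lam)).
      { apply Rmult_gt_compat_l; lra. }
      replace (lam / 2 * (2 / lam)) with 1 in * by (field; lra). lra.
  - exfalso. destruct (HL 1 0%nat) as [n [_ Hn]]. pose proof (VB n). lra.
  - exfalso. destruct (HL 0) as [N HN]. specialize (HN N (le_n _)). pose proof (VB N). lra.
Qed.
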